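(* If $\theta_0,\theta_1\in V_\Lambda\setminus\mathcal W(\mathcal G)$ lie in the same path component of $V_\Lambda\setminus\mathcal W(\mathcal G)$, then $\mathcal P(\theta_0)=\mathcal P(\theta_1)$.
   Context: Let $\Lambda$ be a finite dimensional algebra over a field with $n$ isoclasses of simple modules, and $\mathrm{mod}\text-\Lambda$ the category of finitely generated right $\Lambda$-modules. Fix a torsion class $\mathcal G\subseteq\mathrm{mod}\text-\Lambda$ (closed under isomorphisms, extensions and quotients). For $B\in\mathcal G$, a subobject of $B$ is a submodule in $\mathcal G$; a subobject $A\subseteq B$ is strict if $A\cap B'\in\mathcal G$ for every subobject $B'$ of $B$; a strict quotient of $B$ is $B/A$ with $A$ a strict subobject. Let $V_\Lambda=\mathrm{Hom}_{\mathbb Z}(K_0\Lambda,\mathbb R)\cong\mathbb R^n$ (with its Euclidean topology); $\theta(M)$ denotes $\theta$ applied to the dimension vector of $M$. For $M\in\mathcal G$, the pseudo-wall $D_{\mathcal G}(M)$ is the set of $\theta\in V_\Lambda$ with $\theta(M)=0$ and $\theta(M')\le0$ for every strict subobject $M'$ of $M$. $\mathcal W(\theta)$ is the class of $X\in\mathcal G$ with $\theta\in D_{\mathcal G}(X)$, and $\mathcal W(\mathcal G)$ is the set of $\theta$ with $\mathcal W(\theta)\ne\{0\}$, equivalently the union of the $D_{\mathcal G}(M)$ over nonzero $M\in\mathcal G$. $\mathcal P(\theta)$ is the class consisting of $0$ and all nonzero $M\in\mathcal G$ such that $\theta(M'')>0$ for every nonzero strict quotient $M''$ of $M$ (including $M''=M$).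 *)

(* Defs.v *)
From HB Require Import structures.
From mathcomp Require Import all_boot all_order all_algebra all_field.
From mathcomp Require Import mxrepresentation.
From mathcomp Require Import all_classical all_reals all_analysis.

Set Implicit Arguments.
Unset Strict Implicit.
Unset Printing Implicit Defensive.

Import Order.TTheory GRing.Theory Num.Theory.
Local Open Scope ring_scope.

(* A finitely generated right A-module is encoded concretely as the row
   space F^d together with the action map [ract : A -> 'M_d]:
   the action of a on a row vector v is v *m ract a. *)
Record rmod (F : fieldType) (A : falgType F) := RMod {
  rdim : nat;
  ract : A -> 'M[F]_rdim }.

Definition is_rmod (F : fieldType) (A : falgType F) (M : rmod A) : Prop :=
  [/\ (forall (k : F) (a b : A), ract M (k *: a + b) = k *: ract M a + ract M b),
      ract M 1 = 1%:M
    & (forall a b : A, ract M (a * b) = ract M a *m ract M b)].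

Definition is_submod (F : fieldType) (A : falgType F) (M : rmod A)
    (U : 'M[F]_(rdim M)) : Prop :=
  forall a : A, (U *m ract M a <= U)%MS.

Definition subm (F : fieldType) (A : falgType F) (M : rmod A)
    (U : 'M[F]_(rdim M)) : rmod A :=
  @RMod F A (\rank U) (fun a => in_submod U (val_submod 1%:M *m ract M a)).

Definition quotm (F : fieldType) (A : falgType F) (M : rmod A)
    (U : 'M[F]_(rdim M)) : rmod A :=
  @RMod F A (\rank (cokermx U))
    (fun a => in_factmod U (val_factmod 1%:M *m ract M a)).

Definition rmod_iso (F : fieldType) (A : falgType F) (M N : rmod A) : Prop :=
  rdim M = rdim N /\
  exists P : 'M[F]_(rdim M, rdim N),
    \rank P = rdim M /\ forall a : A, ract M a *m P = P *m ract N a.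

Definition torsion_class (F : fieldType) (A : falgType F) (G : rmod A -> Prop)
  : Prop :=
  [/\ (forall M N : rmod A, is_rmod M -> is_rmod N -> rmod_iso M N ->
         G M -> G N),
      (forall (M : rmod A) (U : 'M[F]_(rdim M)), is_rmod M -> is_submod U ->
         G M -> G (quotm U))
    & (forall (M : rmod A) (U : 'M[F]_(rdim M)), is_rmod M -> is_submod U ->
         G (subm U) -> G (quotm U) -> G M)].

Definition subobj (F : fieldType) (A : falgType F) (G : rmod A -> Prop)
    (B : rmod A) (U : 'M[F]_(rdim B)) : Prop :=
  is_submod U /\ G (subm U).

Definition strict_subobj (F : fieldType) (A : falgType F) (G : rmod A -> Prop)
    (B : rmod A) (U : 'M[F]_(rdim B)) : Prop :=
  subobj G U /\
  forall V : 'M[F]_(rdim B), subobj G V -> G (subm (U :&: V)%MS).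

(* V_Lambda = Hom_Z(K_0 Lambda, R): the additive functions on mod-Lambda,
   i.e. iso-invariant functions additive on short exact sequences
   0 -> U -> M -> M/U -> 0. theta(M) is then theta of the class [M]. *)
Definition in_V (F : fieldType) (A : falgType F) (R : realType)
    (theta : rmod A -> R) : Prop :=
  (forall M N : rmod A, is_rmod M -> is_rmod N -> rmod_iso M N ->
     theta M = theta N) /\
  (forall (M : rmod A) (U : 'M[F]_(rdim M)), is_rmod M -> is_submod U ->
     theta M = theta (subm U) + theta (quotm U)).

Definition in_pseudo_wall (F : fieldType) (A : falgType F) (R : realType)
    (G : rmod A -> Prop) (M : rmod A) (theta : rmod A -> R) : Prop :=
  theta M = 0 /\
  forall U : 'M[F]_(rdim M), strict_subobj G U -> theta (subm U) <= 0.

Definition in_W (F : fieldType) (A : falgType F) (R : realType)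
    (G : rmod A -> Prop) (theta : rmod A -> R) : Prop :=
  exists M : rmod A,
    [/\ is_rmod M, G M, (0 < rdim M)%N & in_pseudo_wall G M theta].

Definition in_P (F : fieldType) (A : falgType F) (R : realType)
    (G : rmod A -> Prop) (theta : rmod A -> R) (M : rmod A) : Prop :=
  is_rmod M /\
  (rdim M = 0%N \/
   (G M /\
    forall U : 'M[F]_(rdim M), strict_subobj G U ->
      (0 < rdim (quotm U))%N -> 0 < theta (quotm U))).

(* Main.v *)
Require Import Defs.
From HB Require Import structures.
From mathcomp Require Import all_boot all_order all_algebra all_field.
From mathcomp Require Import mxrepresentation.
From mathcomp Require Import all_classical all_reals all_analysis.
From mathcomp Require Import zify.

Import GRing.Theory.
Set Implicit Arguments.
Unset Strict Implicit.
Unset Printing Implicit Defensive.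
Local Open Scope ring_scope.

Section Frame.
Variables (F : fieldType) (A : falgType F).
Implicit Types (N X Y : rmod A).

Lemma subB_sub m1 m2 n (P Q : 'M[F]_(m1, n)) (C : 'M[F]_(m2, n)) :
  (P <= C)%MS -> (Q <= C)%MS -> (P - Q <= C)%MS.
Proof.
move=> hP hQ; apply: addmx_sub => //.
by rewrite -scaleN1r; apply: scalemx_sub.
Qed.

Definition realized N X {mb} (B : 'M[F]_(mb, rdim N)) (E : 'M[F]_(rdim X, rdim N)) :=
  [/\ forall a, (B *m ract N a <= B)%MS,
      forall m (z : 'M[F]_(m, rdim X)), (z *m E <= B)%MS -> z = 0
    & forall a, (ract X a *m E - E *m ract N a <= B)%MS].
Arguments realized N X {mb} B E.

Lemma realized_uniq N X mb (B : 'M[F]_(mb, rdim N)) E m (x y : 'M[F]_(m, rdim X)) :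
  realized N X B E -> (x *m E - y *m E <= B)%MS -> x = y.
Proof.
by case=> _ inj _ h; apply: subr0_eq; apply: inj; rewrite mulmxBl.
Qed.

Lemma realized_top N : realized N N (0 : 'M[F]_(rdim N)) (1%:M : 'M[F]_(rdim N)).
Proof.
split.
- by move=> a; rewrite mul0mx.
- by move=> m z; rewrite mulmx1 submx0 => /eqP.
- by move=> a; rewrite mulmx1 mul1mx subrr.
Qed.

Lemma cong_trans m1 m2 n (x y z : 'M[F]_(m1, n)) (B : 'M[F]_(m2, n)) :
  (x - y <= B)%MS -> (y - z <= B)%MS -> (x - z <= B)%MS.
Proof.
move=> h1 h2; have -> : x - z = (x - y) + (y - z) by rewrite addrA subrK.
exact: addmx_sub.
Qed.

Section Cong.
Variables (m1 m2 n : nat) (B : 'M[F]_(m2, n)).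
Implicit Types x y z : 'M[F]_(m1, n).
Lemma cong_sym x y : (x - y <= B)%MS -> (y - x <= B)%MS.
Proof. by move=> h; rewrite -opprB -scaleN1r; apply: scalemx_sub. Qed.
Lemma cong_add x y x' y' : (x - y <= B)%MS -> (x' - y' <= B)%MS ->
  ((x + x') - (y + y') <= B)%MS.
Proof. by move=> h h'; rewrite opprD addrACA; apply: addmx_sub. Qed.
Lemma cong_scale (k : F) x y : (x - y <= B)%MS -> (k *: x - k *: y <= B)%MS.
Proof. by move=> h; rewrite -scalerBr; apply: scalemx_sub. Qed.
Lemma cong_eq x y : x = y -> (x - y <= B)%MS.
Proof. by move=> ->; rewrite subrr sub0mx. Qed.
End Cong.
Lemma cong_mull m1 m2 m3 n (B : 'M[F]_(m2, n)) (C : 'M[F]_(m3, m1)) (x y : 'M[F]_(m1, n)) :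
  (x - y <= B)%MS -> (C *m x - C *m y <= B)%MS.
Proof. by move=> h; rewrite -mulmxBr; apply: mulmx_sub. Qed.
Lemma cong_mulr m1 m2 n p (B : 'M[F]_(m2, n)) (C : 'M[F]_(n, p)) (B' : 'M[F]_(m2, p)) (x y : 'M[F]_(m1, n)) :
  (x - y <= B)%MS -> (B *m C <= B')%MS -> (x *m C - y *m C <= B')%MS.
Proof. by move=> h hB; rewrite -mulmxBl; apply: submx_trans (submxMr _ h) hB. Qed.

Lemma realized_rmod N X mb (B : 'M[F]_(mb, rdim N)) E :
  is_rmod N -> realized N X B E -> is_rmod X.
Proof.
move=> [hl h1 hm] R; have [stB _ hE] := R.
have hEs a : (E *m ract N a - ract X a *m E <= B)%MS by apply: cong_sym.
split.
- move=> k a b; apply: (realized_uniq R).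
  apply: cong_trans (hE _) _.
  rewrite hl mulmxDr -scalemxAr mulmxDl -scalemxAl.
  by apply: cong_add; [apply: cong_scale|].
- apply: (realized_uniq R); apply: cong_trans (hE _) _.
  by rewrite h1 mulmx1 mul1mx subrr sub0mx.
- move=> a b; apply: (realized_uniq R); apply: cong_trans (hE _) _.
  rewrite hm !mulmxA.
  apply: (@cong_trans _ _ _ _ ((ract X a *m E) *m ract N b)).
  + exact: cong_mulr (hEs a) (stB b).
  + by rewrite -!mulmxA; apply: cong_mull.
Qed.

Lemma realized_sub N X mb (B : 'M[F]_(mb, rdim N)) E (W : 'M[F]_(rdim X)) :
  realized N X B E -> is_submod W ->
  realized N (subm W) B (@val_submod F (rdim X) W _ 1%:M *m E).
Proof.
case=> stB inj hE hW; split => //.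
- move=> m z; rewrite mulmxA -val_submodE => /inj /eqP.
  by rewrite val_submod_eq0 => /eqP.
- move=> a /=; rewrite mulmxA -val_submodE in_submodK; last first.
    exact: submx_trans (submxMr _ (val_submodP _)) (hW a).
  by rewrite -(mulmxA _ (ract X a)) -(mulmxA _ E) -mulmxBr; apply: mulmx_sub; apply: hE.
Qed.

Lemma realized_quot N X mb (B : 'M[F]_(mb, rdim N)) E (W : 'M[F]_(rdim X)) :
  realized N X B E -> is_submod W ->
  realized N (quotm W) (B + W *m E)%MS (@val_factmod F (rdim X) W _ 1%:M *m E).
Proof.
case=> stB inj hE hW; split.
- move=> a; rewrite addsmxMr addsmx_sub; apply/andP; split.
    exact: submx_trans (stB a) (addsmxSl _ _).
  rewrite -(subrK (W *m ract X a *m E) (W *m E *m ract N a)).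
  apply: addmx_sub.
    apply: submx_trans (addsmxSl _ _).
    by rewrite -!mulmxA -mulmxBr; apply: mulmx_sub; apply: cong_sym; apply: hE.
  by apply: submx_trans (addsmxSr _ _); apply: submxMr.
- move=> m z /sub_addsmxP [[u1 u2] /= hz].
  have h1 : z *m val_factmod 1%:M = u2 *m W.
    apply: subr0_eq; apply: inj.
    by rewrite mulmxBl -(mulmxA z) hz -(mulmxA u2) addrK submxMl.
  have h2 : (val_factmod z <= W)%MS by rewrite val_factmodE h1 submxMl.
  by rewrite -[z](val_factmodK (U := W)); apply/eqP; rewrite in_factmod_eq0.
- move=> a /=; rewrite mulmxA -val_factmodE.
  set y := val_factmod 1%:M *m ract X a.
  have -> : val_factmod (in_factmod W y) = y - val_submod (in_submod W y).
    by rewrite -{2}(add_sub_fact_mod W y) addrC addKr.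
  rewrite mulmxBl addrAC; apply: subB_sub.
    apply: submx_trans (addsmxSl _ _).
    by rewrite /y -(mulmxA _ (ract X a)) -(mulmxA _ E) -mulmxBr; apply: mulmx_sub; apply: hE.
  by apply: submx_trans (addsmxSr _ _); apply: submxMr; apply: val_submodP.
Qed.

Lemma realized_lift N X mb (B : 'M[F]_(mb, rdim N)) E mb' (B' : 'M[F]_(mb', rdim N)) :
  realized N X B E -> (B <= B')%MS -> (forall a, B' *m ract N a <= B')%MS ->
  ((E + B)%MS :&: B' <= B)%MS -> realized N X B' E.
Proof.
case=> stB inj hE hBB' stB' hcap; split => //.
- move=> m z hz; apply: inj; apply: submx_trans hcap.
  by rewrite sub_capmx hz andbT; apply: submx_trans (addsmxSl _ _); apply: submxMl.
- by move=> a; apply: submx_trans (hE a) hBB'.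
Qed.

Lemma realized_eqB N X mb (B : 'M[F]_(mb, rdim N)) E mb' (B' : 'M[F]_(mb', rdim N)) :
  realized N X B E -> (B <= B')%MS -> (B' <= B)%MS -> realized N X B' E.
Proof.
move=> R h1 h2; have [stB _ _] := R; apply: (realized_lift R) => //.
  by move=> a; apply: submx_trans (submxMr _ h2) (submx_trans (stB a) h1).
by apply: submx_trans (capmxSr _ _) h2.
Qed.

Lemma realized_map N X Y mb (B : 'M[F]_(mb, rdim N)) E E' :
  realized N X B E -> realized N Y B E' -> (E <= E' + B)%MS ->
  exists P : 'M[F]_(rdim X, rdim Y), row_free P /\ (E - P *m E' <= B)%MS.
Proof.
move=> [stB injX hX] _ /sub_addsmxP [[P u] /= hE]; exists P.
have hPE : (E - P *m E' <= B)%MS by rewrite hE addrAC subrr add0r submxMl.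
split => //; rewrite -kermx_eq0; apply/eqP; apply: injX.
rewrite -(subrK (P *m E') E) mulmxDr mulmxA mulmx_ker mul0mx addr0.
exact: mulmx_sub.
Qed.

Lemma realized_iso N X Y mb (B : 'M[F]_(mb, rdim N)) E E' :
  realized N X B E -> realized N Y B E' -> (E <= E' + B)%MS ->
  (E' <= E + B)%MS -> rmod_iso X Y.
Proof.
move=> RX RY h1 h2.
have [P [fP hP]] := realized_map RX RY h1.
have [P' [fP' _]] := realized_map RY RX h2.
have hd : rdim X = rdim Y.
  move: fP fP'; rewrite /row_free => /eqP e1 /eqP e2.
  apply/eqP; rewrite eqn_leq; apply/andP; split; [rewrite -{1}e1 | rewrite -{1}e2]; exact: rank_leq_col.
split => //; exists P; split; first by apply/eqP.
move=> a; have [stB _ hX] := RX; have [_ _ hY] := RY.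
apply: (realized_uniq RY).
apply: (@cong_trans _ _ _ _ (ract X a *m E)).
  by rewrite -mulmxA; apply: cong_mull; apply: cong_sym.
apply: cong_trans (hX a) _.
apply: (@cong_trans _ _ _ _ (P *m E' *m ract N a)).
  exact: cong_mulr hP (stB a).
by rewrite -!mulmxA; apply: cong_mull; apply: cong_sym.
Qed.

Lemma realized_submod N X mb (B : 'M[F]_(mb, rdim N)) E ms (S : 'M[F]_(ms, rdim N))
  (Y : 'M[F]_(rdim X)) :
  realized N X B E -> (forall a, S *m ract N a <= S)%MS ->
  (Y *m E <= S)%MS -> (S <= Y *m E + B)%MS -> is_submod Y.
Proof.
move=> R stS h1 h2 a; have [stB _ hX] := R.
have h3 : (Y *m ract X a *m E <= Y *m E + B)%MS.
  rewrite -(subrK (Y *m E *m ract N a) (Y *m ract X a *m E)).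
  apply: addmx_sub.
    apply: submx_trans (addsmxSr _ _).
    by rewrite -!mulmxA -mulmxBr; apply: mulmx_sub; apply: hX.
  apply: submx_trans h2; apply: submx_trans (stS a); exact: submxMr.
case/sub_addsmxP: h3 => [[u1 u2] /= h].
have -> : Y *m ract X a = u1 *m Y.
  apply: (realized_uniq R).
  by rewrite h -mulmxA addrAC subrr add0r submxMl.
exact: submxMl.
Qed.

Lemma mx_dim0 m k (P Q : 'M[F]_(m, k)) : m = 0%N -> P = Q.
Proof. by move=> hm; apply/matrixP => i; move: (ltn_ord i); rewrite {2}hm. Qed.

Lemma dim0_rmod X : rdim X = 0%N -> is_rmod X.
Proof. by move=> h; split => *; apply: mx_dim0. Qed.

Lemma dim0_iso X Y : rdim X = 0%N -> rdim Y = 0%N -> rmod_iso X Y.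
Proof.
move=> hX hY; split; first by rewrite hX hY.
exists 0; split; first by rewrite mxrank0 hX.
by move=> a; apply: mx_dim0.
Qed.

Lemma full_fact n (U : 'M[F]_n) : (1%:M <= U + @val_factmod F n U _ 1%:M)%MS.
Proof.
rewrite -{1}(add_sub_fact_mod U 1%:M); apply: addmx_sub_adds.
  exact: val_submodP.
by rewrite val_factmodE submxMl.
Qed.

Lemma cap_stable n m1 m2 (U : 'M[F]_(m1, n)) (V : 'M[F]_(m2, n)) (R : 'M[F]_n) :
  (U *m R <= U)%MS -> (V *m R <= V)%MS -> ((U :&: V)%MS *m R <= U :&: V)%MS.
Proof.
move=> hU hV; rewrite sub_capmx; apply/andP; split.
  exact: submx_trans (submxMr _ (capmxSl _ _)) hU.
exact: submx_trans (submxMr _ (capmxSr _ _)) hV.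
Qed.

Lemma adds_stable n m1 m2 (U : 'M[F]_(m1, n)) (V : 'M[F]_(m2, n)) (R : 'M[F]_n) :
  (U *m R <= U)%MS -> (V *m R <= V)%MS -> ((U + V)%MS *m R <= U + V)%MS.
Proof. by move=> hU hV; rewrite addsmxMr; apply: addsmxS. Qed.

Lemma sub_rmod N (W : 'M[F]_(rdim N)) : is_rmod N -> is_submod W -> is_rmod (subm W).
Proof. by move=> hN hW; apply: realized_rmod hN (realized_sub (realized_top N) hW). Qed.

Lemma quot_rmod N (W : 'M[F]_(rdim N)) : is_rmod N -> is_submod W -> is_rmod (quotm W).
Proof. by move=> hN hW; apply: realized_rmod hN (realized_quot (realized_top N) hW). Qed.

Lemma submod0 N : is_submod (0 : 'M[F]_(rdim N)).
Proof. by move=> a; rewrite mul0mx sub0mx. Qed.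

Lemma submod1 N : is_submod (1%:M : 'M[F]_(rdim N)).
Proof. by move=> a; apply: submx1. Qed.

Lemma theta_zero (R : realType) (theta : rmod A -> R) X :
  in_V theta -> rdim X = 0%N -> theta X = 0.
Proof.
move=> [hi ha] h0.
have hX := dim0_rmod h0.
have e := ha X 0 hX (submod0 X).
have d1 : rdim (subm (0 : 'M[F]_(rdim X))) = 0%N by rewrite /= mxrank0.
have d2 : rdim (quotm (0 : 'M[F]_(rdim X))) = 0%N by rewrite /= mxrank_coker mxrank0 h0.
rewrite -(hi _ _ hX (dim0_rmod d1) (dim0_iso h0 d1)) in e.
rewrite -(hi _ _ hX (dim0_rmod d2) (dim0_iso h0 d2)) in e.
by apply: (addrI (theta X)); rewrite addr0 -e.
Qed.

Variable G : rmod A -> Prop.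

Lemma G_zero N X : torsion_class G -> is_rmod N -> G N -> rdim X = 0%N -> G X.
Proof.
move=> [hi hq _] hN GN h0.
have d : rdim (quotm (1%:M : 'M[F]_(rdim N))) = 0%N by rewrite /= mxrank_coker mxrank1 subnn.
apply: (hi _ _ (quot_rmod hN (submod1 N)) (dim0_rmod h0) (dim0_iso d h0)).
exact: (hq N 1%:M hN (submod1 N) GN).
Qed.

Lemma zero_strict Q : torsion_class G -> is_rmod Q -> G Q ->
  strict_subobj G (0 : 'M[F]_(rdim Q)).
Proof.
move=> tc hQ GQ; split; first split.
- exact: submod0.
- by apply: (G_zero tc hQ GQ); rewrite /= mxrank0.
- by move=> V _; rewrite cap0mx; apply: (G_zero tc hQ GQ); rewrite /= mxrank0.
Qed.

Lemma sub1_iso N : rmod_iso N (subm (1%:M : 'M[F]_(rdim N))).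
Proof.
apply: (realized_iso (realized_top N) (realized_sub (realized_top N) (submod1 N))).
  by apply: submx_trans (addsmxSl _ _); rewrite mulmx1 val_submod1.
by apply: submx_trans (addsmxSl _ _); apply: submx1.
Qed.

End Frame.

Arguments realized {F A} N X {mb} B E.
Section SQ.
Variables (F : fieldType) (A : falgType F).
Implicit Types (N X Y : rmod A).

Definition sqm N (T S : 'M[F]_(rdim N)) : 'M[F]_(rdim (subm T)) :=
  <<in_submod T S>>%MS.

Lemma sqm_mul N (T S : 'M[F]_(rdim N)) : (S <= T)%MS ->
  (sqm T S *m @val_submod F _ T _ 1%:M :=: S)%MS.
Proof.
move=> hST; apply: eqmx_trans (eqmxMr _ (genmxE _)) _.
by rewrite -val_submodE in_submodK.
Qed.

Lemma sq_submod N (T S : 'M[F]_(rdim N)) :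
  is_submod T -> is_submod S -> (S <= T)%MS -> is_submod (sqm T S).
Proof.
move=> hT hS hST.
apply: (realized_submod (realized_sub (realized_top N) hT) hS); rewrite mulmx1.
  by rewrite sqm_mul.
by apply: submx_trans (addsmxSl _ _); rewrite sqm_mul.
Qed.

Lemma sq_subiso N (T S : 'M[F]_(rdim N)) :
  is_submod T -> is_submod S -> (S <= T)%MS -> rmod_iso (subm S) (subm (sqm T S)).
Proof.
move=> hT hS hST.
have RT := realized_sub (realized_top N) hT.
apply: (realized_iso (realized_sub (realized_top N) hS)
                     (realized_sub RT (sq_submod hT hS hST))); rewrite !mulmx1.
  apply: submx_trans (addsmxSl _ _).
  by rewrite (eqmxMr _ (val_submod1 _)) sqm_mul // val_submod1.
apply: submx_trans (addsmxSl _ _).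
by rewrite (eqmxMr _ (val_submod1 _)) sqm_mul // val_submod1.
Qed.

Lemma sq_quot N (T S : 'M[F]_(rdim N)) :
  is_submod T -> is_submod S -> (S <= T)%MS ->
  realized N (quotm (sqm T S)) S
    (@val_factmod F _ (sqm T S) _ 1%:M *m @val_submod F _ T _ 1%:M).
Proof.
move=> hT hS hST.
have RT := realized_sub (realized_top N) hT.
have R0 := realized_quot RT (sq_submod hT hS hST).
rewrite !mulmx1 in R0.
apply: (realized_eqB R0).
  by rewrite addsmx_sub sub0mx sqm_mul // submx_refl.
by rewrite adds0mx sqm_mul // submx_refl.
Qed.

Lemma sq_span1 N (T S : 'M[F]_(rdim N)) :
  (@val_factmod F _ (sqm T S) _ 1%:M *m @val_submod F _ T _ 1%:M <= T)%MS.
Proof. by apply: submx_trans (submxMl _ _) _; rewrite val_submod1. Qed.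

Lemma sq_span2 N (T S : 'M[F]_(rdim N)) : (S <= T)%MS ->
  (T <= @val_factmod F _ (sqm T S) _ 1%:M *m @val_submod F _ T _ 1%:M + S)%MS.
Proof.
move=> hST.
have h1 : (T <= 1%:M *m @val_submod F _ T _ 1%:M)%MS by rewrite mul1mx val_submod1.
apply: submx_trans h1 _.
apply: submx_trans (submxMr _ (full_fact (sqm T S))) _.
rewrite addsmxMr addsmxC; apply: addsmxS => //.
by rewrite sqm_mul.
Qed.

End SQ.

Section Trans.
Variables (F : fieldType) (A : falgType F) (G : rmod A -> Prop).

Lemma strict_trans N (U : 'M[F]_(rdim N)) (W : 'M[F]_(rdim (quotm U))) :
  torsion_class G -> is_rmod N -> G N -> strict_subobj G U -> strict_subobj G W ->
  exists V : 'M[F]_(rdim N), strict_subobj G V /\ rmod_iso (quotm W) (quotm V).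
Proof.
move=> tc hN GN [[hU GU] sU] [[hW GW] sW].
have [hi hq he] := tc.
have RN := realized_top N.
have RQ : realized N (quotm U) U (@val_factmod F _ U _ 1%:M).
  have R0 := realized_quot RN hU; rewrite !mulmx1 in R0.
  apply: (realized_eqB R0); first by rewrite addsmx_sub sub0mx submx_refl.
  by rewrite adds0mx submx_refl.
have RQW := realized_quot RQ hW.
have hV : is_submod (U + W *m @val_factmod F _ U _ 1%:M)%MS by case: RQW.
have RV : realized N (quotm (U + W *m @val_factmod F _ U _ 1%:M)%MS)
     (U + W *m @val_factmod F _ U _ 1%:M)%MS (@val_factmod F _ (U + W *m @val_factmod F _ U _ 1%:M)%MS _ 1%:M).
  have R0 := realized_quot RN hV; rewrite !mulmx1 in R0.
  apply: (realized_eqB R0); first by rewrite addsmx_sub sub0mx submx_refl.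
  by rewrite adds0mx submx_refl.
set V := (U + W *m @val_factmod F _ U _ 1%:M)%MS in hV RV RQW *.
have hUV : (U <= V)%MS by apply: addsmxSl.
exists V; split; last first.
  apply: (realized_iso RQW RV).
    apply: submx_trans (submx1 _) _; rewrite addsmxC; exact: full_fact.
  apply: submx_trans (submx1 _) _.
  apply: submx_trans (full_fact U) _.
  rewrite addsmx_sub; apply/andP; split.
    exact: submx_trans hUV (addsmxSr _ _).
  apply: (@submx_trans _ _ _ _ _ _ ((W + @val_factmod F _ W _ 1%:M)%MS *m @val_factmod F _ U _ 1%:M)).
    by rewrite -{1}[@val_factmod F _ U _ 1%:M]mul1mx; apply: submxMr; apply: full_fact.
  rewrite addsmxMr addsmx_sub; apply/andP; split.
    by apply: submx_trans (addsmxSr _ _); apply: addsmxSr.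
  exact: addsmxSl.
have key : forall V' : 'M[F]_(rdim N), is_submod V' -> G (subm V') -> G (subm (V :&: V')%MS).
  move=> V' hV' GV'.
  pose Vt := (<<in_factmod U V'>>%MS : 'M[F]_(rdim (quotm U))).
  have eVt : (Vt *m @val_factmod F _ U _ 1%:M :=: val_factmod (in_factmod U V'))%MS.
    apply: eqmx_trans (eqmxMr _ (genmxE _)) _.
    by rewrite -val_factmodE.
  have hVt1 : (Vt *m @val_factmod F _ U _ 1%:M <= U + V')%MS by rewrite eVt proj_factmodS.
  have hVt2 : (V' <= U + Vt *m @val_factmod F _ U _ 1%:M)%MS.
    rewrite (adds_eqmx (eqmx_refl U) eVt).
    rewrite -{1}(add_sub_fact_mod U V'); apply: addmx_sub_adds.
      exact: val_submodP.
    exact: submx_refl.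
  have hVts : is_submod Vt.
    apply: (realized_submod RQ (S := (V' + U)%MS)).
    - by move=> a; apply: adds_stable.
    - by rewrite addsmxC.
    - rewrite addsmx_sub; apply/andP; split; last exact: addsmxSr.
      by rewrite addsmxC.
  have hS : is_submod (U :&: V')%MS by move=> a; apply: cap_stable.
  have GVt : G (subm Vt).
    have hST : (U :&: V' <= V')%MS by apply: capmxSr.
    have Rq := sq_quot hV' hS hST.
    have Rq' := realized_lift Rq (capmxSl U V') hU.
    have Rs := realized_sub RQ hVts.
    have hE1 := sq_span1 V' (U :&: V')%MS.
    have hE2 := sq_span2 hST.
    have Rq2 : realized N (quotm (sqm V' (U :&: V')%MS)) U
        (@val_factmod F _ (sqm V' (U :&: V')%MS) _ 1%:M *m @val_submod F _ V' _ 1%:M).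
      apply: Rq' => //.
      rewrite sub_capmx capmxSr /=.
      apply: submx_trans (capmxSl _ _) _.
      by rewrite addsmx_sub hE1 capmxSr.
    have iso : rmod_iso (quotm (sqm V' (U :&: V')%MS)) (subm Vt).
      apply: (realized_iso Rq2 Rs).
        rewrite addsmxC (adds_eqmx (eqmx_refl U) (eqmxMr _ (val_submod1 _))).
        exact: submx_trans hE1 hVt2.
      rewrite (eqmxMr _ (val_submod1 _)); apply: submx_trans hVt1 _.
      rewrite addsmx_sub addsmxSr /=.
      apply: submx_trans hE2 _; apply: addsmxS => //; exact: capmxSl.
    have Gq := hq (subm V') (sqm V' (U :&: V')%MS) (sub_rmod hN hV') (sq_submod hV' hS hST) GV'.
    exact: (hi _ _ (quot_rmod (sub_rmod hN hV') (sq_submod hV' hS hST))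
               (sub_rmod (quot_rmod hN hU) hVts) iso Gq).
  have GY : G (subm (W :&: Vt)%MS) by apply: sW; split.
  have hC : is_submod (V :&: V')%MS by move=> a; apply: cap_stable.
  have hSC : (U :&: V' <= V :&: V')%MS by apply: capmxS.
  have Gsub : G (subm (sqm (V :&: V')%MS (U :&: V')%MS)).
    apply: (hi _ _ (sub_rmod hN hS) (sub_rmod (sub_rmod hN hC) (sq_submod hC hS hSC))
              (sq_subiso hC hS hSC)).
    by apply: sU; split.
  have hY : is_submod (W :&: Vt)%MS by move=> a; apply: cap_stable.
  have Ry := realized_sub RQ hY.
  have hE1 := sq_span1 (V :&: V')%MS (U :&: V')%MS.
  have hE2 := sq_span2 hSC.
  have Rq2 : realized N (quotm (sqm (V :&: V')%MS (U :&: V')%MS)) U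
      (@val_factmod F _ (sqm (V :&: V')%MS (U :&: V')%MS) _ 1%:M *m
       @val_submod F _ (V :&: V')%MS _ 1%:M).
    apply: (realized_lift (sq_quot hC hS hSC) (capmxSl U V') hU).
    rewrite sub_capmx capmxSr /=.
    apply: submx_trans (capmxSl _ _) _.
    rewrite addsmx_sub capmxSr andbT.
    exact: submx_trans hE1 (capmxSr _ _).
  have mod1 : (V :&: V' <= (W :&: Vt)%MS *m @val_factmod F _ U _ 1%:M + U)%MS.
    have hy : (in_factmod U (V :&: V')%MS <= W :&: Vt)%MS.
      rewrite sub_capmx; apply/andP; split.
        rewrite in_factmodE; apply: submx_trans (submxMr _ (capmxSl V V')) _.
        rewrite -in_factmodE /V in_factmod_addsK -val_factmodE val_factmodK.
        exact: submx_refl.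
      rewrite in_factmodE; apply: submx_trans (submxMr _ (capmxSr V V')) _.
      by rewrite -in_factmodE /Vt genmxE.
    have e := add_sub_fact_mod U (V :&: V')%MS.
    rewrite -{1}e addsmxC; apply: addmx_sub_adds; first exact: val_submodP.
    by rewrite val_factmodE; apply: submxMr.
  have mod2 : ((W :&: Vt)%MS *m @val_factmod F _ U _ 1%:M <= V :&: V' + U)%MS.
    have hYV : ((W :&: Vt)%MS <= in_factmod U V')%MS.
      by apply: submx_trans (capmxSr _ _) _; rewrite /Vt genmxE.
    case/submxP: hYV => r hr.
    have hz : (W :&: Vt)%MS = in_factmod U (r *m V') by rewrite hr /in_factmod /= mulmxA.
    have e := add_sub_fact_mod U (r *m V'); rewrite -hz in e.
    have hYv : (W :&: Vt)%MS *m @val_factmod F _ U _ 1%:M =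
        r *m V' - val_submod (in_submod U (r *m V')).
      by rewrite -val_factmodE -{1}e addrC addKr.
    have hs : (val_submod (in_submod U (r *m V')) <= U)%MS by apply: val_submodP.
    rewrite hYv; apply: subB_sub; last exact: submx_trans hs (addsmxSr _ _).
    apply: submx_trans (addsmxSl _ _).
    rewrite sub_capmx submxMl andbT.
    rewrite -e; apply: addmx_sub; first exact: submx_trans hs hUV.
    rewrite val_factmodE; apply: submx_trans (submxMr _ (capmxSl _ _)) _.
    exact: addsmxSr.
  have iso : rmod_iso (subm (W :&: Vt)%MS) (quotm (sqm (V :&: V')%MS (U :&: V')%MS)).
    apply: (realized_iso Ry Rq2).
      rewrite (eqmxMr _ (val_submod1 _)); apply: submx_trans mod2 _.
      rewrite addsmx_sub addsmxSr andbT.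
      apply: submx_trans hE2 _; apply: addsmxS => //; exact: capmxSl.
    rewrite addsmxC (adds_eqmx (eqmx_refl U) (eqmxMr _ (val_submod1 _))) addsmxC.
    exact: submx_trans hE1 mod1.
  have Gquot : G (quotm (sqm (V :&: V')%MS (U :&: V')%MS)).
    exact: (hi _ _ (sub_rmod (quot_rmod hN hU) hY)
              (quot_rmod (sub_rmod hN hC) (sq_submod hC hS hSC)) iso GY).
  exact: (he _ _ (sub_rmod hN hC) (sq_submod hC hS hSC) Gsub Gquot).
split; first split => //.
  rewrite -(capmx1 V); apply: key; first exact: submod1.
  exact: (hi _ _ hN (sub_rmod hN (submod1 N)) (sub1_iso N) GN).
by move=> V' [hV' GV']; apply: key.
Qed.

End Trans.

Import Order.TTheory GRing.Theory Num.Theory numFieldNormedType.Exports.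
Local Open Scope ring_scope.
Local Open Scope classical_set_scope.

Section Main.
Variables (F : fieldType) (A : falgType F) (R : realType) (G : rmod A -> Prop).

Definition Pos (theta : rmod A -> R) (N : rmod A) :=
  forall U : 'M[F]_(rdim N), strict_subobj G U ->
    (0 < rdim (quotm U))%N -> 0 < theta (quotm U).

Lemma cont_sub (f : R -> R) s t :
  {within [set t : R | 0 <= t <= 1], continuous f} -> 0 <= s -> t <= 1 -> s <= t ->
  {within `[s, t], continuous f}.
Proof.
move=> hc h0 h1 hst; apply: continuous_subspaceW hc => x /=.
rewrite in_itv /= => /andP [a b].
by apply/andP; split; [exact: le_trans h0 a | exact: le_trans b h1].
Qed.

Lemma IVT01 (f : R -> R) s t :
  {within [set t : R | 0 <= t <= 1], continuous f} -> 0 <= s <= 1 -> 0 <= t <= 1 ->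
  0 < f s -> f t <= 0 -> exists2 c, 0 <= c <= 1 & f c = 0.
Proof.
move=> hc /andP [s0 s1] /andP [t0 t1] fs ft.
have [hst|hts] := leP s t.
  have hv : Num.min (f s) (f t) <= 0 <= Num.max (f s) (f t).
    by rewrite ge_min le_max ft (ltW fs) orbT.
  have [c hc1 hc2] := IVT hst (cont_sub hc s0 t1 hst) hv.
  exists c => //; move: hc1; rewrite in_itv /= => /andP [a b].
  by apply/andP; split; [exact: le_trans s0 a | exact: le_trans b t1].
have hts' := ltW hts.
have hv : Num.min (f t) (f s) <= 0 <= Num.max (f t) (f s).
  by rewrite ge_min le_max ft (ltW fs) orbT.
have [c hc1 hc2] := IVT hts' (cont_sub hc t0 s1 hts') hv.
exists c => //; move: hc1; rewrite in_itv /= => /andP [a b].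
by apply/andP; split; [exact: le_trans t0 a | exact: le_trans b s1].
Qed.

Lemma key_step (gamma : R -> rmod A -> R) :
  torsion_class G ->
  (forall t : R, 0 <= t <= 1 -> in_V (gamma t) /\ ~ in_W G (gamma t)) ->
  (forall M : rmod A, is_rmod M ->
     {within [set t : R | 0 <= t <= 1], continuous (fun t : R => gamma t M)}) ->
  forall n (N : rmod A), (rdim N <= n)%N -> is_rmod N -> G N ->
  forall s, 0 <= s <= 1 -> Pos (gamma s) N ->
  forall t, 0 <= t <= 1 -> Pos (gamma t) N.
Proof.
move=> tc hpath hcont; have [hi hq he] := tc.
elim=> [|n IH] N hn hN GN s hs Ps t ht U sU hqU.
  by move: hqU; rewrite /= mxrank_coker; lia.
have step1 : forall r, 0 <= r <= 1 -> forall U' : 'M[F]_(rdim N), strict_subobj G U' ->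
    (0 < \rank U')%N -> (0 < rdim (quotm U'))%N -> 0 < gamma r (quotm U').
  move=> r hr U' sU' hr0 hq'.
  have [[hU' GU'] _] := sU'.
  have hQ : is_rmod (quotm U') := quot_rmod hN hU'.
  have GQ : G (quotm U') := hq N U' hN hU' GN.
  have dQ : (rdim (quotm U') <= n)%N.
    by rewrite /= mxrank_coker; lia.
  have PsQ : Pos (gamma s) (quotm U').
    move=> W sW hqW.
    have [V [sV iso]] := strict_trans tc hN GN sU' sW.
    have [[hiV _] _] := hpath s hs.
    have [[hV _] _] := sV; have [[hW _] _] := sW.
    rewrite (hiV _ _ (quot_rmod hQ hW) (quot_rmod hN hV) iso).
    by apply: Ps sV _; rewrite -iso.1.
  have PrQ := IH _ dQ hQ GQ s hs PsQ r hr.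
  have [inVr _] := hpath r hr; have [hiV haV] := inVr.
  have d0 : rdim (subm (0 : 'M[F]_(rdim (quotm U')))) = 0%N by rewrite /= mxrank0.
  have d1 : (0 < rdim (quotm (0 : 'M[F]_(rdim (quotm U')))))%N.
    by rewrite /= mxrank_coker mxrank0 subn0.
  rewrite (haV _ 0 hQ (submod0 _)) (theta_zero inVr d0) add0r.
  exact: PrQ 0 (zero_strict tc hQ GQ) d1.
case: (posnP (\rank U)) => [hr0|hr0]; last exact: step1 t ht U sU hr0 hqU.
case: (ltP 0 (gamma t (quotm U))) => // hle.
have [[hU GU] _] := sU.
have hc := hcont _ (quot_rmod hN hU).
have fs : 0 < gamma s (quotm U) := Ps U sU hqU.
have [c hc01 fc] := IVT01 hc hs ht fs hle.
have [inVc nW] := hpath c hc01; have [hiC haC] := inVc.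
exfalso; apply: nW; exists N; split => //.
  by move: hqU; rewrite /= mxrank_coker; lia.
have eN : gamma c N = 0.
  rewrite (haC _ U hN hU) fc (theta_zero inVc (_ : rdim (subm U) = 0%N)) ?addr0 //.
split => // U' sU'; have [[hU' _] _] := sU'.
case: (posnP (\rank U')) => [z|p]; first by rewrite (theta_zero inVc (X := subm U') z).
case: (posnP (rdim (quotm U'))) => [zq|pq].
  have := haC _ U' hN hU'; rewrite eN (theta_zero inVc zq) addr0 => h.
  by rewrite -h.
have q := step1 c hc01 U' sU' p pq.
have h := haC _ U' hN hU'; rewrite eN in h.
have -> : gamma c (subm U') = - gamma c (quotm U').
  by apply/eqP; rewrite -addr_eq0 -h.
by rewrite oppr_le0; apply: ltW.
Qed.

End Main.

Unset Implicit Arguments.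
Set Strict Implicit.

Theorem mainTheorem14 (F : fieldType) (A : falgType F) (R : realType)
    (G : rmod A -> Prop) (theta0 theta1 : rmod A -> R) :
  torsion_class G ->
  in_V theta0 -> ~ in_W G theta0 ->
  in_V theta1 -> ~ in_W G theta1 ->
  (exists gamma : R -> rmod A -> R,
     [/\ (forall M : rmod A, is_rmod M -> gamma 0 M = theta0 M),
         (forall M : rmod A, is_rmod M -> gamma 1 M = theta1 M),
         (forall t : R, 0 <= t <= 1 -> in_V (gamma t) /\ ~ in_W G (gamma t))
       & (forall M : rmod A, is_rmod M ->
            {within [set t : R | 0 <= t <= 1], continuous (fun t : R => gamma t M)})]) ->
  forall M : rmod A, in_P G theta0 M <-> in_P G theta1 M.
Proof.
move=> tc _ _ _ _ [gamma [g0 g1 hpath hcont]] M.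
have conv : forall (th th' : rmod A -> R), (forall M, is_rmod M -> th' M = th M) ->
    forall N, is_rmod N -> Pos G th N -> Pos G th' N.
  move=> th th' hg N hN P U sU hq; have [[hU _] _] := sU.
  by rewrite hg; [exact: P U sU hq | exact: quot_rmod hN hU].
have h01 : 0 <= (0 : R) <= 1 by apply/andP; split; [exact: ler01 || exact: lexx | exact: ler01 || exact: lexx].
have h11 : 0 <= (1 : R) <= 1 by apply/andP; split; [exact: ler01 || exact: lexx | exact: ler01 || exact: lexx].
split => -[hM [h0|[GM PM]]]; split => //; [by left | right | by left | right];
  split => //.
- apply: (conv (gamma 1) theta1 _ M hM); first by move=> N hN; rewrite g1.
  apply: (key_step tc hpath hcont (leqnn _) hM GM h01 _ h11).
  by apply: (conv theta0 (gamma 0) _ M hM PM) => N hN; rewrite g0.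
- apply: (conv (gamma 0) theta0 _ M hM); first by move=> N hN; rewrite g0.
  apply: (key_step tc hpath hcont (leqnn _) hM GM h11 _ h01).
  by apply: (conv theta1 (gamma 1) _ M hM PM) => N hN; rewrite g1.
Qed.
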